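(* Let $X$ be a finite set, $t$ a full support transition function and $s$ a full support arrival function. Then $t$ and $s$ are jointly menu invariant if and only if they satisfy no investment: for every strict investment plan $i$ and every $\delta\in(0,1)$ there exists $\succ\in\mathcal{L}(X)$ such that $$\sum_{(A,\succ')\in\mathcal{X}_2\times\mathcal{L}(X)}\ \sum_{B\in\mathcal{X}_2}\delta\, i(A,\succ')\,\rho_s(B\mid A)\,t_{\succ'}(M(\succ,B),\succ)<\sum_{A\in\mathcal{X}_2} i(A,\succ).$$
   Context: $X$ is a finite set; $\mathcal{X}_2$ the collection of subsets of $X$ with at least two elements; $\mathcal{L}(X)$ the linear orders on $X$; $M(\succ,A)$ the $\succ$-maximal element of $A$. A transition function $t:X\times\mathcal{L}(X)\to\Delta(\mathcal{L}(X))$ is full support if all its values have full support; $t_{\succ'}(x,\succ)$ is the probability of $\succ'$ under $t(x,\succ)$. An arrival function is $s:\mathcal{X}_2\to\Delta(\mathcal{X}_2)$, full support if all values have full support; $s_B(A)$ is the probability of $B$ under $s(A)$. Let $\pi$ be the unique stationary distribution of the Markov chain on $\mathcal{X}_2$ given by $s$, and $\rho_s(B\mid A)=\pi(B)s_A(B)/\pi(A)$. The pair $(t,s)$ defines a Markov chain on $\mathcal{X}_2\times\mathcal{L}(X)$ with transition probability from $(A,\succ)$ to $(B,\succ')$ equal to $s_B(A)\,t_{\succ'}(M(\succ,A),\succ)$; it has a unique stationary distribution $\psi$. The pair is jointly menu invariant if $\psi(A,\succ)=\pi'(A)\nu(\succ)$ for some $\pi'\in\Delta(\mathcal{X}_2)$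 and $\nu\in\Delta(\mathcal{L}(X))$. An investment plan is $i:\mathcal{X}_2\times\mathcal{L}(X)\to\mathbb{R}_{\ge0}$, strict if not identically zero. *)

(* Defs.v *)
From mathcomp Require Import all_boot all_order all_algebra.
From mathcomp Require Import reals.
Set Implicit Arguments. Unset Strict Implicit. Unset Printing Implicit Defensive.
Import Order.TTheory GRing.Theory Num.Theory.
Local Open Scope ring_scope.

Section Defs.
Variable X : finType.

Definition X2 := {A : {set X} | 1 < #|A|}%N.

(* Linear orders on X, given by their strict relation x ≻ y *)
Definition is_linord (r : {ffun X -> {ffun X -> bool}}) : bool :=
  [&& [forall x, ~~ r x x],
      [forall x, forall y, forall z, r x y ==> r y z ==> r x z] &
      [forall x, forall y, (x != y) ==> (r x y || r y x)]].

Definition LO := {r : {ffun X -> {ffun X -> bool}} | is_linord r}.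

Definition lo_rel (r : LO) (x y : X) : bool := val r x y.

(* an (irrelevant) default element of A, used only to make M total *)
Definition X2_witness (A : X2) : X :=
  @enum_val X (mem (val A)) (Ordinal (ltnW (valP A))).

Definition M (r : LO) (A : X2) : X :=
  odflt (X2_witness A)
    [pick x in val A | [forall y in val A, (y != x) ==> lo_rel r x y]].
End Defs.

Section Prob.
Variable R : realType.

Definition is_dist (S : finType) (p : S -> R) : Prop :=
  (forall x, 0 <= p x) /\ \sum_(x : S) p x = 1.

Variable X : finType.

(* transition function t : X × L(X) -> Δ(L(X));
   t x r r' = t_{r'}(x, r), the probability of r' under t(x, r) *)
Definition transition_fun (t : X -> LO X -> LO X -> R) : Prop :=
  forall x r, is_dist (t x r).
Definition full_support_t (t : X -> LO X -> LO X -> R) : Prop :=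
  forall x r r', 0 < t x r r'.

(* arrival function s : X_2 -> Δ(X_2); s A B = s_B(A), the probability of B under s(A) *)
Definition arrival_fun (s : X2 X -> X2 X -> R) : Prop :=
  forall A, is_dist (s A).
Definition full_support_s (s : X2 X -> X2 X -> R) : Prop :=
  forall A B, 0 < s A B.

Definition stationary_s (s : X2 X -> X2 X -> R) (pi : X2 X -> R) : Prop :=
  is_dist pi /\ forall B, pi B = \sum_(A : X2 X) pi A * s A B.

(* ρ_s(B | A) = π(B) s_A(B) / π(A) *)
Definition rho (s : X2 X -> X2 X -> R) (pi : X2 X -> R) (B A : X2 X) : R :=
  pi B * s B A / pi A.

Definition stationary_joint (t : X -> LO X -> LO X -> R)
    (s : X2 X -> X2 X -> R) (psi : X2 X * LO X -> R) : Prop :=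
  is_dist psi /\
  forall B r', psi (B, r') =
    \sum_(Ar : X2 X * LO X) psi Ar * s Ar.1 B * t (M Ar.2 Ar.1) Ar.2 r'.

Definition jointly_menu_invariant (t : X -> LO X -> LO X -> R)
    (s : X2 X -> X2 X -> R) : Prop :=
  forall psi, stationary_joint t s psi ->
    exists (pi' : X2 X -> R) (nu : LO X -> R),
      is_dist pi' /\ is_dist nu /\ forall A r, psi (A, r) = pi' A * nu r.

Definition investment_plan (i : X2 X -> LO X -> R) : Prop :=
  forall A r, 0 <= i A r.
Definition strict_investment_plan (i : X2 X -> LO X -> R) : Prop :=
  investment_plan i /\ exists A r, i A r != 0.

Definition no_investment (t : X -> LO X -> LO X -> R)
    (s : X2 X -> X2 X -> R) (pi : X2 X -> R) : Prop :=
  forall (i : X2 X -> LO X -> R) (delta : R),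
    strict_investment_plan i -> 0 < delta < 1 ->
    exists r : LO X,
      \sum_(Ar' : X2 X * LO X) \sum_(B : X2 X)
          delta * i Ar'.1 Ar'.2 * rho s pi B Ar'.1 * t (M r B) r Ar'.2
      < \sum_(A : X2 X) i A r.
End Prob.

(* Main.v *)
Require Import Defs.
From mathcomp Require Import all_boot all_order all_algebra.
From mathcomp Require Import reals.
From mathcomp Require Import zify ring lra.
Import Order.TTheory GRing.Theory Num.Theory.
Set Implicit Arguments. Unset Strict Implicit. Unset Printing Implicit Defensive.
Local Open Scope ring_scope.

Definition stoch (R : realType) (S : finType) (P : S -> S -> R) :=
  (forall x y, 0 <= P x y) /\ (forall x, \sum_y P x y = 1).
Definition fixedv (R : realType) (S : finType) (P : S -> S -> R) (v : S -> R) :=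
  forall y, \sum_x v x * P x y = v y.

Lemma sumE (R : realType) (S : finType) (F : S -> R) :
  \sum_(x : S) F x = \sum_(i < #|S|) F (enum_val i).
Proof. rewrite -big_enum_val. apply: eq_bigl => x. by rewrite inE. Qed.

Lemma abs_fixed (R : realType) (S : finType) (P : S -> S -> R) (v : S -> R) :
  stoch P -> fixedv P v -> fixedv P (fun x => `|v x|).
Proof.
move=> [P0 P1] fv.
have le y : `|v y| <= \sum_x `|v x| * P x y.
  rewrite -{1}fv (le_trans (ler_norm_sum _ _ _)) //.
  by apply: ler_sum => x _; rewrite normrM (ger0_norm (P0 _ _)).
have sumD : \sum_y (\sum_x `|v x| * P x y - `|v y|) = 0.
  rewrite sumrB exchange_big /=.
  under eq_bigr => x _ do rewrite -mulr_sumr P1 mulr1.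
  by rewrite subrr.
move=> y; apply/eqP; rewrite -subr_eq0; apply/eqP.
by apply: (psumr_eq0P _ sumD) => // z _; rewrite subr_ge0.
Qed.

Lemma uniq_aux (R : realType) (S : finType) (P : S -> S -> R) (d : S -> R) (x : S) :
  (forall x y, 0 < P x y) -> stoch P -> fixedv P d -> \sum_y d y = 0 ->
  0 <= \sum_i d i * P i x -> forall i, d i = 0.
Proof.
move=> Ppos sP fd s0 ge.
have := abs_fixed sP fd x; rewrite -(fd x) (ger0_norm ge) => eq.
have h : \sum_i (`|d i| - d i) * P i x = 0.
  under eq_bigr => i _ do rewrite mulrBl.
  by rewrite sumrB eq subrr.
have dpos i : 0 <= d i.
  have hz : (`|d i| - d i) * P i x = 0.
    apply: (psumr_eq0P (P := predT) (F := fun i => (`|d i| - d i) * P i x) _ h) => //.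
    by move=> j _; rewrite mulr_ge0 ?subr_ge0 ?ler_norm ?ltW.
  move/eqP: hz; rewrite mulf_eq0 (gt_eqF (Ppos _ _)) orbF subr_eq0.
  by move/eqP => <-.
by move=> i; apply: (psumr_eq0P (P := predT) _ s0).
Qed.

Lemma uniq_fixed (R : realType) (S : finType) (P : S -> S -> R) (d : S -> R) :
  (forall x y, 0 < P x y) -> stoch P -> fixedv P d -> \sum_y d y = 0 ->
  forall i, d i = 0.
Proof.
move=> Ppos sP fd s0 i.
have [ge|lt] := leP 0 (\sum_j d j * P j i).
  exact: (uniq_aux Ppos sP fd s0 ge).
have fd' : fixedv P (fun x => - d x).
  by move=> y; rewrite -(fd y) -sumrN; apply: eq_bigr => j _; rewrite mulNr.
have s0' : \sum_y - d y = 0 by rewrite sumrN s0 oppr0.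
have ge : 0 <= \sum_j - d j * P j i.
  by rewrite (eq_bigr (fun j => - (d j * P j i))) ?sumrN ?oppr_ge0 ?ltW // => j _; rewrite mulNr.
by apply/eqP; rewrite -oppr_eq0; apply/eqP; apply: (uniq_aux Ppos sP fd' s0' ge).
Qed.

Definition PmI (R : realType) (S : finType) (P : S -> S -> R) : 'M[R]_#|S| :=
  \matrix_(i, j) (P (enum_val i) (enum_val j) - (i == j)%:R).

Lemma mulPmI (R : realType) (S : finType) (P : S -> S -> R) (v : 'rV[R]_#|S|) j :
  (v *m PmI P) 0 j = \sum_i v 0 i * P (enum_val i) (enum_val j) - v 0 j.
Proof.
rewrite !mxE.
under eq_bigr => i _ do rewrite mxE mulrBr.
rewrite sumrB; congr (_ - _).
rewrite (bigD1 j) //= eqxx mulr1 big1 ?addr0 // => i /negPf ->; by rewrite mulr0.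
Qed.

Lemma exists_fixed_nz (R : realType) (S : finType) (P : S -> S -> R) (x0 : S) :
  stoch P -> exists v : 'rV[R]_#|S|, v != 0 /\ v *m PmI P = 0.
Proof.
move=> [P0 P1].
have c0 : (const_mx 1 : 'rV[R]_#|S|) *m (PmI P)^T = 0.
  apply/rowP => j; rewrite !mxE.
  under eq_bigr => i _ do rewrite !mxE mul1r.
  rewrite sumrB -(sumE (fun y => P (enum_val j) y)) P1.
  rewrite (bigD1 j) //= eqxx big1 ?addr0 ?subrr // => i; by rewrite eq_sym => /negPf ->.
have : \det (PmI P) == 0.
  rewrite -det_tr; apply/det0P; exists (const_mx 1) => //.
  apply/eqP => /rowP /(_ (enum_rank x0)); rewrite !mxE; apply/eqP; exact: oner_neq0.
by move/det0P => [v v0 vA]; exists v.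
Qed.

Lemma exists_stat (R : realType) (S : finType) (P : S -> S -> R) (x0 : S) :
  stoch P -> exists mu, is_dist mu /\ fixedv P mu.
Proof.
move=> sP; have [v [v0 vA]] := exists_fixed_nz x0 sP.
pose vf x := v 0 (enum_rank x).
have fv : fixedv P vf.
  move=> y; have := mulPmI P v (enum_rank y); rewrite vA mxE enum_rankK.
  move/eqP; rewrite eq_sym subr_eq0 => /eqP H; rewrite /vf -H sumE.
  by apply: eq_bigr => i _; rewrite enum_valK.
have fa := abs_fixed sP fv.
have [j vj] : exists j, v 0 j != 0.
  case: (pickP (fun j => v 0 j != 0)) => [j vj|h]; first by exists j.
  have v00 : v = 0.
    apply/rowP => k; move: (h k) => /negbFE/eqP ->; by rewrite mxE.
  by move: v0; rewrite v00 eqxx.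
have spos : 0 < \sum_x `|vf x|.
  rewrite (bigD1 (enum_val j)) //= /vf enum_valK.
  by rewrite ltr_pwDl ?normr_gt0 // sumr_ge0.
exists (fun x => `|vf x| / \sum_x `|vf x|); split; first split.
- by move=> x; rewrite divr_ge0 // ltW.
- by rewrite -mulr_suml divff // gt_eqF.
- move=> y; rewrite -(fa y) mulr_suml; apply: eq_bigr => x _.
  by rewrite mulrAC.
Qed.

Lemma ker_fixed (R : realType) (S : finType) (P : S -> S -> R) (v : 'rV[R]_#|S|) :
  v *m PmI P = 0 -> fixedv P (fun x => v 0 (enum_rank x)).
Proof.
move=> vA y; have := mulPmI P v (enum_rank y); rewrite vA mxE enum_rankK.
move/eqP; rewrite eq_sym subr_eq0 => /eqP H; rewrite -H sumE.
by apply: eq_bigr => i _; rewrite enum_valK.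
Qed.

Lemma mulPmIT (R : realType) (S : finType) (P : S -> S -> R) (v : 'rV[R]_#|S|) j :
  (v *m (PmI P)^T) 0 j = \sum_k P (enum_val j) (enum_val k) * v 0 k - v 0 j.
Proof.
rewrite !mxE.
under eq_bigr => i _ do rewrite !mxE mulrBr.
rewrite sumrB; congr (_ - _).
  by apply: eq_bigr => k _; rewrite mulrC.
rewrite (bigD1 j) //= eqxx mulr1 big1 ?addr0 // => i.
by rewrite eq_sym => /negPf ->; rewrite mulr0.
Qed.

Lemma solve_poisson (R : realType) (S : finType) (P : S -> S -> R) (mu w : S -> R) :
  (forall x y, 0 < P x y) -> stoch P -> is_dist mu -> fixedv P mu ->
  \sum_x mu x * w x = 0 ->
  exists f : S -> R, forall x, \sum_y P x y * f y - f x = w x.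
Proof.
move=> Ppos sP [mu0 mu1] fmu smw.
pose A := PmI P.
pose m : 'rV[R]_#|S| := \row_i mu (enum_val i).
have kerm : (kermx A <= m)%MS.
  apply/row_subP => k.
  set u := row k (kermx A).
  have uA : u *m A = 0 by rewrite /u -row_mul mulmx_ker row0.
  have fu := ker_fixed uA.
  pose c := \sum_x u 0 (enum_rank x).
  pose d x := u 0 (enum_rank x) - c * mu x.
  have fd : fixedv P d.
    move=> y; rewrite /d -(fu y) -(fmu y) mulr_sumr -sumrB.
    by apply: eq_bigr => x _; rewrite mulrBl mulrA.
  have sd : \sum_y d y = 0 by rewrite /d sumrB -mulr_sumr mu1 mulr1 subrr.
  have d0 := uniq_fixed Ppos sP fd sd.
  have -> : u = c *: m.
    apply/rowP => j; have := d0 (enum_val j).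
    rewrite /d enum_valK => /eqP; rewrite subr_eq0 => /eqP ->.
    by rewrite !mxE.
  by rewrite scalemx_sub // submx_refl.
have rk1 : (#|S| - \rank A <= 1)%N.
  by rewrite -mxrank_ker (leq_trans (mxrankS kerm)) // rank_leq_row.
pose mc := m^T.
have mA : m *m A = 0.
  apply/rowP => j; rewrite mulPmI.
  under eq_bigr => i _ do rewrite mxE.
  by rewrite !mxE -(fmu (enum_val j)) (sumE (fun x => mu x * P x (enum_val j))) subrr.
have AK : (A^T <= kermx mc)%MS by apply/sub_kermxP; rewrite /mc -trmx_mul mA trmx0.
have mc0 : mc != 0.
  apply/eqP => /matrixP h.
  have : \sum_x mu x = 0.
    rewrite sumE; apply: big1 => i _; have := h i 0; by rewrite !mxE.
  by rewrite mu1; apply/eqP; exact: oner_neq0.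
have rmc : \rank mc = 1%N.
  apply/eqP; rewrite eqn_leq rank_leq_col lt0n mxrank_eq0 mc0 //.
have rK : \rank (kermx mc) = (#|S| - 1)%N by rewrite mxrank_ker rmc.
have KA : (kermx mc <= A^T)%MS.
  rewrite -(mxrank_leqif_sup AK).2 mxrank_tr rK.
  apply/eqP; have := mxrankS AK; rewrite mxrank_tr rK; lia.
pose wr : 'rV[R]_#|S| := \row_i w (enum_val i).
have wK : (wr <= kermx mc)%MS.
  apply/sub_kermxP; apply/rowP => i; rewrite !mxE -[RHS]smw (sumE (fun x => mu x * w x)).
  by apply: eq_bigr => k _; rewrite !mxE mulrC.
have /submxP [D wD] := submx_trans wK KA.
exists (fun x => D 0 (enum_rank x)) => x.
have E : wr 0 (enum_rank x) = (D *m A^T) 0 (enum_rank x) by rewrite wD.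
rewrite /A mulPmIT mxE enum_rankK in E; rewrite E (sumE (fun y => P x y * D 0 (enum_rank y))).
by congr (_ - _); apply: eq_bigr => k _; rewrite enum_valK.
Qed.

Lemma pos_elem (R : realType) (S : finType) (p : S -> R) :
  (forall x, 0 <= p x) -> \sum_x p x = 1 -> exists x, 0 < p x.
Proof.
move=> p0 p1; case: (pickP (fun x => 0 < p x)) => [x px|h]; first by exists x.
have : \sum_x p x = 0.
  apply: big1 => x _; apply/eqP; rewrite eq_le p0 andbT leNgt; exact/negbT/h.
by rewrite p1 => /eqP; rewrite oner_eq0.
Qed.

Lemma sum_pos (R : realType) (S : finType) (F : S -> R) (x0 : S) :
  (forall x, 0 < F x) -> 0 < \sum_x F x.
Proof.
move=> Fp; rewrite (bigD1 x0) //= ltr_pwDl // sumr_ge0 // => x _; exact: ltW.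
Qed.

Lemma pairS (R : realType) (I J : finType) (F : I * J -> R) :
  \sum_(x : I * J) F x = \sum_i \sum_j F (i, j).
Proof. by rewrite pair_big; apply: eq_big => [[i j]|[i j] _]. Qed.

Lemma sum2 (R : realType) (S : finType) (a b : S) (F : S -> R) :
  a != b -> (forall x, x != a -> x != b -> F x = 0) -> \sum_x F x = F a + F b.
Proof.
move=> ab F0; rewrite (bigD1 a) //= (bigD1 b) /=; last by rewrite eq_sym.
rewrite big1 ?addr0 // => x /andP [xa xb]; exact: F0.
Qed.

Definition lo0_rel (X : finType) : {ffun X -> {ffun X -> bool}} :=
  [ffun x => [ffun y => (enum_rank y < enum_rank x)%N]].

Lemma lo0_proof (X : finType) : is_linord (lo0_rel X).
Proof.
apply/and3P; split.
- by apply/forallP => x; rewrite !ffunE ltnn.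
- apply/forallP => x; apply/forallP => y; apply/forallP => z; rewrite !ffunE.
  apply/implyP => h1; apply/implyP => h2; exact: ltn_trans h2 h1.
- apply/forallP => x; apply/forallP => y; apply/implyP => xy; rewrite !ffunE.
  have : enum_rank x != enum_rank y by apply: contra xy => /eqP/enum_rank_inj ->.
  by rewrite neq_ltn orbC.
Qed.

Definition lo0 (X : finType) : LO X := exist _ (lo0_rel X) (lo0_proof X).

Lemma x2top_proof (X : finType) (hX : (1 < #|X|)%N) : (1 < #|[set: X]|)%N.
Proof. by rewrite cardsT. Qed.
Definition x2top (X : finType) (hX : (1 < #|X|)%N) : X2 X :=
  exist (fun A : {set X} => (1 < #|A|)%N) [set: X] (x2top_proof hX).

Definition Pm (R : realType) (X : finType) (t : X -> LO X -> LO X -> R)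
  (s : X2 X -> X2 X -> R) (pi : X2 X -> R) (A : X2 X) (r r' : LO X) : R :=
  \sum_B rho s pi B A * t (M r B) r r'.

Definition Jk (R : realType) (X : finType) (t : X -> LO X -> LO X -> R)
  (s : X2 X -> X2 X -> R) (x y : X2 X * LO X) : R :=
  s x.1 y.1 * t (M x.2 x.1) x.2 y.2.

Lemma pi_pos (R : realType) (X : finType) (s : X2 X -> X2 X -> R) (pi : X2 X -> R) :
  full_support_s s -> stationary_s s pi -> forall A, 0 < pi A.
Proof.
move=> sp [[p0 p1] pst] B.
have [A pA] := pos_elem p0 p1.
rewrite pst (bigD1 A) //= ltr_pwDl ?mulr_gt0 // sumr_ge0 // => C _.
by rewrite mulr_ge0 // ltW.
Qed.

Lemma rho_sum (R : realType) (X : finType) (s : X2 X -> X2 X -> R) (pi : X2 X -> R) :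
  full_support_s s -> stationary_s s pi -> forall A, \sum_B rho s pi B A = 1.
Proof.
move=> sp st A; have pp := pi_pos sp st.
rewrite /rho -mulr_suml; case: st => _ pst; rewrite -pst divff //; exact: lt0r_neq0.
Qed.

Lemma rho_pos (R : realType) (X : finType) (s : X2 X -> X2 X -> R) (pi : X2 X -> R) :
  full_support_s s -> stationary_s s pi -> forall A B, 0 < rho s pi B A.
Proof.
move=> sp st A B; have pp := pi_pos sp st.
by rewrite /rho divr_gt0 ?mulr_gt0.
Qed.

Lemma Pm_stoch (R : realType) (X : finType) (t : X -> LO X -> LO X -> R)
  (s : X2 X -> X2 X -> R) (pi : X2 X -> R) :
  transition_fun t -> full_support_s s -> stationary_s s pi ->
  forall A, stoch (Pm t s pi A).
Proof.
move=> tT sp st A; split.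
  move=> r r'; apply: sumr_ge0 => B _; rewrite mulr_ge0 ?(ltW (rho_pos sp st _ _)) //.
  by case: (tT (M r B) r).
move=> r; rewrite /Pm exchange_big /=.
under eq_bigr => B _ do rewrite -mulr_sumr (proj2 (tT _ _)) mulr1.
exact: rho_sum.
Qed.

Lemma Pm_pos (R : realType) (X : finType) (t : X -> LO X -> LO X -> R)
  (s : X2 X -> X2 X -> R) (pi : X2 X -> R) :
  full_support_t t -> full_support_s s -> stationary_s s pi ->
  forall A r r', 0 < Pm t s pi A r r'.
Proof.
move=> tp sp st A r r'; apply: (sum_pos A) => B.
by rewrite mulr_gt0 ?rho_pos.
Qed.

Lemma J_stoch (R : realType) (X : finType) (t : X -> LO X -> LO X -> R)
  (s : X2 X -> X2 X -> R) :
  transition_fun t -> arrival_fun s -> stoch (Jk t s).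
Proof.
move=> tT sA; split.
  move=> x y; rewrite /Jk mulr_ge0 //; [by case: (sA x.1) | by case: (tT (M x.2 x.1) x.2)].
move=> x; rewrite pairS /Jk /=.
under eq_bigr => B _ do rewrite -mulr_sumr (proj2 (tT _ _)) mulr1.
exact: (proj2 (sA _)).
Qed.

Lemma J_pos (R : realType) (X : finType) (t : X -> LO X -> LO X -> R)
  (s : X2 X -> X2 X -> R) :
  full_support_t t -> full_support_s s -> forall x y, 0 < Jk t s x y.
Proof. by move=> tp sp x y; rewrite /Jk mulr_gt0. Qed.

Lemma prodJ (R : realType) (X : finType) (t : X -> LO X -> LO X -> R)
  (s : X2 X -> X2 X -> R) (pi : X2 X -> R) :
  full_support_s s -> stationary_s s pi ->
  forall (nu : LO X -> R) B r',
  \sum_x (pi x.1 * nu x.2) * Jk t s x (B, r') = pi B * \sum_r nu r * Pm t s pi B r r'.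
Proof.
move=> sp st nu B r'; have pB := gt_eqF (pi_pos sp st B).
rewrite pairS exchange_big mulr_sumr; apply: eq_bigr => r _ /=.
rewrite /Pm mulr_sumr mulr_sumr; apply: eq_bigr => A _.
rewrite /Jk /rho /=; field; exact/negbT.
Qed.

Lemma lhsE (R : realType) (X : finType) (t : X -> LO X -> LO X -> R)
  (s : X2 X -> X2 X -> R) (pi : X2 X -> R) (i : X2 X -> LO X -> R) delta r :
  \sum_(Ar' : X2 X * LO X) \sum_(B : X2 X)
          delta * i Ar'.1 Ar'.2 * rho s pi B Ar'.1 * t (M r B) r Ar'.2
  = delta * \sum_A \sum_r' i A r' * Pm t s pi A r r'.
Proof.
rewrite pairS mulr_sumr; apply: eq_bigr => A _; rewrite mulr_sumr; apply: eq_bigr => r' _.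
rewrite /Pm !mulr_sumr; apply: eq_bigr => B _ /=; ring.
Qed.

Lemma statJ (R : realType) (X : finType) (t : X -> LO X -> LO X -> R)
  (s : X2 X -> X2 X -> R) psi :
  stationary_joint t s psi <-> is_dist psi /\ fixedv (Jk t s) psi.
Proof.
split=> [[d f]|[d f]]; split=> //.
  move=> [B r']; rewrite f; apply: eq_bigr => x _; by rewrite /Jk mulrA.
move=> B r'; rewrite -f; apply: eq_bigr => x _; by rewrite /Jk mulrA.
Qed.

Lemma bound_shift (R : realType) (S : finType) (f g : S -> R) :
  exists c, forall r, 1 <= f r + c /\ 1 <= g r + c.
Proof.
exists (1 + \sum_r (`|f r| + `|g r|)) => r.
have h3 : `|f r| + `|g r| <= \sum_r (`|f r| + `|g r|).
  by rewrite (bigD1 r) //= lerDl sumr_ge0 // => *; rewrite addr_ge0.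
have := ler_norm (- f r); have := ler_norm (- g r); rewrite !normrN.
have := normr_ge0 (f r); have := normr_ge0 (g r).
move=> h4 h5 h1 h2; split; lra.
Qed.

Unset Implicit Arguments.

Theorem theorem3 (R : realType) (X : finType) (hX : (1 < #|X|)%N)
    (t : X -> LO X -> LO X -> R) (s : X2 X -> X2 X -> R) (pi : X2 X -> R) :
  transition_fun t -> full_support_t t ->
  arrival_fun s -> full_support_s s ->
  stationary_s s pi ->
  jointly_menu_invariant t s <-> no_investment t s pi.
Proof.
move=> tT tp sA sp st.
have pip := pi_pos sp st.
have [[pi0 pi1] pist] := st.
have Pst := Pm_stoch tT sp st.
have Ppos := Pm_pos tp sp st.
have Jst := J_stoch tT sA.
have Jpos := J_pos tp sp.
have sst : stoch s by split=> [A B|A]; [case: (sA A) | case: (sA A)].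
have fpi : fixedv s pi by move=> B; rewrite pist.
pose A0 := x2top hX.
pose r0 := lo0 X.
split.
- move=> jmi i delta [i0 [Ai [ri iri]]] /andP [d0 d1].
  have [psi [psid psif]] := exists_stat (A0, r0) Jst.
  have [pi' [nu [[pi'0 pi'1] [[nu0 nu1] prod]]]] := jmi psi (proj2 (statJ t s psi) (conj psid psif)).
  have fpi' : fixedv s pi'.
    move=> B; rewrite -[RHS]mulr1 -nu1 mulr_sumr.
    have -> : \sum_r' pi' B * nu r' = \sum_r' psi (B, r') by apply: eq_bigr => r' _; rewrite prod.
    under [RHS]eq_bigr => r' _ do rewrite -(psif (B, r')).
    rewrite exchange_big pairS; apply: eq_bigr => A _.
    under [RHS]eq_bigr => r _ do rewrite -mulr_sumr /Jk /= -mulr_sumr (proj2 (tT _ _)) mulr1 prod.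
    by rewrite -mulr_suml -mulr_sumr nu1 mulr1.
  have epi : forall A, pi' A = pi A.
    move=> A; apply/eqP; rewrite -subr_eq0; apply/eqP.
    apply: (uniq_fixed (d := fun A => pi' A - pi A)) sp sst _ _ A.
      move=> B; under eq_bigr => x _ do rewrite mulrBl.
      by rewrite sumrB fpi' fpi.
    by rewrite sumrB pi'1 pi1 subrr.
  have fnu : forall B, fixedv (Pm t s pi B) nu.
    move=> B r'; have := psif (B, r'); rewrite prod epi.
    rewrite (eq_bigr (fun x => (pi x.1 * nu x.2) * Jk t s x (B, r'))); last first.
      by move=> [A r] _; rewrite prod epi.
    rewrite (prodJ _ sp st) => /(mulfI (lt0r_neq0 (pip B))) //.
  have nup : forall r, 0 < nu r.
    have [r1 nr1] := pos_elem nu0 nu1.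
    move=> r; rewrite -(fnu A0 r) (bigD1 r1) //= ltr_pwDl ?mulr_gt0 // sumr_ge0 // => r2 _.
    by rewrite mulr_ge0 // ltW.
  pose L r := \sum_(Ar' : X2 X * LO X) \sum_(B : X2 X)
          delta * i Ar'.1 Ar'.2 * rho s pi B Ar'.1 * t (M r B) r Ar'.2.
  case: (boolP [exists r, L r < \sum_A i A r]) => [/existsP [r h]|/existsPn h].
    by exists r.
  exfalso.
  have ipos : 0 < i Ai ri by rewrite lt_def iri i0.
  pose K := \sum_r \sum_A nu r * i A r.
  have Kp : 0 < K.
    rewrite /K (bigD1 ri) //= ltr_pwDl //.
      rewrite (bigD1 Ai) //= ltr_pwDl ?mulr_gt0 // sumr_ge0 // => A _.
      by rewrite mulr_ge0 // ltW.
    apply: sumr_ge0 => r _; apply: sumr_ge0 => A _; by rewrite mulr_ge0 // ltW.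
  have KK : K <= delta * K.
    apply: (le_trans (y := \sum_r nu r * L r)).
      apply: ler_sum => r _; rewrite -mulr_sumr; apply: ler_wpM2l; first exact: ltW.
      by rewrite leNgt; exact: h r.
    rewrite le_eqVlt; apply/orP; left; apply/eqP.
    rewrite /L; under eq_bigr => r _ do rewrite lhsE.
    transitivity (\sum_r \sum_A \sum_r' delta * (i A r' * (nu r * Pm t s pi A r r'))).
      apply: eq_bigr => r _; rewrite mulrA mulr_sumr; apply: eq_bigr => A _.
      by rewrite mulr_sumr; apply: eq_bigr => r' _; ring.
    rewrite exchange_big /=.
    transitivity (\sum_A \sum_r' delta * (i A r' * nu r')).
      apply: eq_bigr => A _; rewrite exchange_big /=; apply: eq_bigr => r' _.
      by rewrite -mulr_sumr -mulr_sumr (fnu A r').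
    rewrite /K mulr_sumr; under [RHS]eq_bigr => r _ do rewrite mulr_sumr.
    rewrite [RHS]exchange_big /=; apply: eq_bigr => A _; apply: eq_bigr => r _; ring.
  nra.
- move=> ni psi /statJ [[psi0 psi1] psif].
  have [mu0 [[m00 m01] mu0f]] := exists_stat r0 (Pst A0).
  have allfix : forall A, fixedv (Pm t s pi A) mu0.
    move=> A; case: (eqVneq A A0) => [->//|nA].
    have nA' : A0 != A by rewrite eq_sym.
    have [muA [[mA0 mA1] muAf]] := exists_stat r0 (Pst A).
    suff eqmu : forall r, muA r = mu0 r.
      move=> y; rewrite -eqmu -(muAf y); apply: eq_bigr => x _; by rewrite eqmu.
    move=> r1; apply/eqP; apply: contraT => hne; exfalso.
    pose lam := (muA r1 - mu0 r1)^-1.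
    have lamE : lam * (muA r1 - mu0 r1) = 1 by rewrite mulVf // subr_eq0.
    pose u r := (r == r1)%:R - mu0 r1.
    have su : forall (m : LO X -> R), \sum_r m r * u r = m r1 - mu0 r1 * \sum_r m r.
      move=> m; under eq_bigr => r _ do rewrite /u mulrBr.
      rewrite sumrB (bigD1 r1) //= eqxx mulr1 big1 ?addr0; last first.
        by move=> r /negPf ->; rewrite mulr0.
      by rewrite -mulr_suml mulrC.
    pose wb r := lam * u r.
    pose wa r := 1 - lam * u r.
    have swb : \sum_r mu0 r * wb r = 0.
      transitivity (lam * \sum_r mu0 r * u r).
        by rewrite mulr_sumr; apply: eq_bigr => r _; rewrite /wb; ring.
      by rewrite su m01 mulr1 subrr mulr0.
    have swa : \sum_r muA r * wa r = 0.
      transitivity (\sum_r muA r - lam * \sum_r muA r * u r).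
        by rewrite mulr_sumr -sumrB; apply: eq_bigr => r _; rewrite /wa; ring.
      by rewrite su mA1 mulr1 lamE subrr.
    have [fa fa_eq] := solve_poisson (Ppos A) (Pst A) (conj mA0 mA1) muAf swa.
    have [fb fb_eq] := solve_poisson (Ppos A0) (Pst A0) (conj m00 m01) mu0f swb.
    have [c cge] := bound_shift fa fb.
    pose i C r := if C == A then fa r + c else if C == A0 then fb r + c else 0.
    have Si : forall r, \sum_C i C r = fa r + c + (fb r + c).
      move=> r; rewrite (sum2 nA); last by move=> C /negPf hC /negPf hC'; rewrite /i hC hC'.
      by rewrite /i eqxx (negPf nA') eqxx.
    have pe : forall B f w, (forall x, \sum_y Pm t s pi B x y * f y - f x = w x) ->
        forall r, \sum_r' (f r' + c) * Pm t s pi B r r' = f r + w r + c.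
      move=> B f w fe r; under eq_bigr => r' _ do rewrite mulrDl.
      rewrite big_split /= -mulr_sumr (proj2 (Pst B)) mulr1 -(fe r).
      rewrite (eq_bigr (fun r' => Pm t s pi B r r' * f r')); last by move=> *; rewrite mulrC.
      ring.
    have SPi : forall r, \sum_C \sum_r' i C r' * Pm t s pi C r r'
                 = fa r + wa r + c + (fb r + wb r + c).
      move=> r; rewrite (sum2 nA); last first.
        by move=> C /negPf hC /negPf hC'; apply: big1 => r' _; rewrite /i hC hC' mul0r.
      rewrite /i eqxx (negPf nA') eqxx.
      by rewrite (pe A fa wa fa_eq) (pe A0 fb wb fb_eq).
    have ipl : investment_plan i.
      move=> C r; rewrite /i; have := cge r; case: ifP => _; first lra.
      case: ifP => _ //; lra.
    have inz : i A r1 != 0.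
      rewrite /i eqxx; apply: lt0r_neq0; have := (cge r1).1; lra.
    pose K := 1 + \sum_r \sum_C i C r.
    have Tge : forall r, 0 <= \sum_C i C r by move=> r; apply: sumr_ge0 => C _; exact: ipl.
    have TK : forall r, \sum_C i C r <= K - 1.
      move=> r; rewrite /K [1 + _]addrC addrK (bigD1 r) //= lerDl sumr_ge0 // => *; exact: Tge.
    pose delta := K / (K + 1).
    have K1 : 1 <= K by rewrite /K lerDl sumr_ge0 // => *; exact: Tge.
    have dK : delta * (K + 1) = K by rewrite /delta mulfVK //; apply: lt0r_neq0; lra.
    have d01 : 0 < delta < 1 by apply/andP; split; nra.
    have [r hr] := ni i delta (conj ipl (ex_intro _ A (ex_intro _ r1 inz))) d01.
    move: hr; rewrite lhsE SPi Si.
    have := TK r; rewrite Si.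
    have -> : fa r + wa r + c + (fb r + wb r + c) = fa r + c + (fb r + c) + 1.
      by rewrite /wa /wb; ring.
    move: (fa r + c + (fb r + c)) => T hT hr.
    have := Tge r; rewrite Si => hT0.
    nra.
  pose phi (x : X2 X * LO X) := pi x.1 * mu0 x.2.
  have phif : fixedv (Jk t s) phi.
    by move=> [B r']; rewrite /phi (prodJ _ sp st) (allfix B r').
  have e : forall x, psi x - phi x = 0.
    apply: (uniq_fixed Jpos Jst).
      move=> y; under eq_bigr => x _ do rewrite mulrBl.
      by rewrite sumrB psif phif.
    rewrite sumrB psi1 /phi pairS /=.
    under eq_bigr => A _ do rewrite -mulr_sumr m01 mulr1.
    by rewrite pi1 subrr.
  exists pi, mu0; split; first by split.
  split; first by split.
  move=> A r; have := e (A, r); move/eqP; rewrite subr_eq0 => /eqP.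
  by rewrite /phi.
Qed.
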